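(* Let $$F(x)=\sum_{n\ge0}t^n\sum_{(P,Q)\in\mathcal{I}_n}x^{\mathrm{contact}(P)},\qquad H(x)\equiv H(t,x,s)=\sum_{n\ge0}t^n\sum_{(P,Q)\in\mathcal{I}_n}x^{\mathrm{contact}(P)}\sum_{i=0}^{2n}s^{Q(i)},$$ and write $F(1),H(1)$ for their specializations at $x=1$. Then $$H(x)=F(x)+sxtF(x)\frac{H(x)-H(1)}{x-1}+xtH(x)\frac{F(x)-F(1)}{x-1}.$$
   Context: A Dyck path of size $n$ is a lattice path from $(0,0)$ to $(2n,0)$ with $n$ up-steps $(1,1)$ and $n$ down-steps $(1,-1)$ never going below height $0$; $\mathcal{D}_n$ is their set; $Q(i)$ denotes the height of $Q$ at abscissa $i$. A contact of a path is a vertex of the path lying on the $x$-axis (including both endpoints); $\mathrm{contact}(P)$ is the number of contacts of $P$. The Tamari order on $\mathcal{D}_n$ is the reflexive transitive closure of the relation: if $P$ has a down-step $d$ immediately followed by an up-step and $\mathfrak{e}$ is the shortest excursion following $d$ (a subpath staying strictly above its starting height except at its last point), the path obtained by exchanging $d$ and $\mathfrak{e}$ is larger than $P$. $\mathcal{I}_n$ is the set of pairs $(P,Q)\in\mathcal{D}_n^2$ with $P\le Q$ (Tamari intervals; $P$ lower path, $Q$ upper path). The series are formal power series in $t$. *)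

(* Defs.v *)
From mathcomp Require Import all_boot all_algebra.
Set Implicit Arguments. Unset Strict Implicit. Unset Printing Implicit Defensive.
Import GRing.Theory Num.Theory.
Local Open Scope ring_scope.

(* A lattice path is a seq bool: true = up-step (1,1), false = down-step (1,-1). *)
Definition step_val (b : bool) : int := if b then 1 else -1.

Definition height (P : seq bool) (i : nat) : int := \sum_(b <- take i P) step_val b.

Definition is_dyck (n : nat) (P : seq bool) : bool :=
  [&& size P == (2 * n)%N,
      all (fun i => 0 <= height P i) (iota 0 (size P).+1)
    & height P (size P) == 0].

Definition contact (P : seq bool) : nat :=
  count (fun i => height P i == 0) (iota 0 (size P).+1).

(* If step j of P is a down-step d immediately followed by an up-step, exchange d
   with the shortest excursion e following d (steps j+1 .. k-1, where k is the
   first abscissa > j+1 at which the height returns to the height after d). *)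
Definition rotate (P : seq bool) (j : nat) : option (seq bool) :=
  if (nth true P j == false) && (nth false P j.+1 == true) then
    let h := height P j.+1 in
    match [seq k <- iota j.+2 (size P - j.+1) | height P k == h] with
    | k :: _ => Some (take j P ++ drop j.+1 (take k P) ++ false :: drop k P)
    | [::] => None
    end
  else None.

Definition tam_step (P Q : seq bool) : bool :=
  has (fun j => rotate P j == Some Q) (iota 0 (size P)).

Definition tamari_le (n : nat) (P Q : (2 * n).-tuple bool) : bool :=
  connect [rel A B : (2 * n).-tuple bool | [&& is_dyck n A, is_dyck n B & tam_step A B]] P Q.

(* Polynomials in x (outer variable) with coefficients polynomials in s (inner variable). *)
Notation bipoly := {poly {poly int}}.

(* coefficient of t^n in F(x) *)
Definition Fcoef (n : nat) : bipoly :=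
  \sum_(P : (2 * n).-tuple bool | is_dyck n P)
    \sum_(Q : (2 * n).-tuple bool | is_dyck n Q && tamari_le P Q)
      'X ^+ contact P.

(* coefficient of t^n in H(x) = H(t,x,s) *)
Definition Hcoef (n : nat) : bipoly :=
  \sum_(P : (2 * n).-tuple bool | is_dyck n P)
    \sum_(Q : (2 * n).-tuple bool | is_dyck n Q && tamari_le P Q)
      ('X ^+ contact P * \sum_(i < (2 * n).+1) (('X : {poly int}) ^+ `|height Q i|%N)%:P).

(* divided difference (p(x) - p(1)) / (x - 1), an exact polynomial division *)
Definition ddiff (p : bipoly) : bipoly := (p - (p.[1])%:P) %/ ('X - 1).

(* Main.v *)
Require Import Defs.
From mathcomp Require Import all_boot all_algebra.
From mathcomp Require Import zify ring.
Import GRing.Theory Num.Theory.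
Local Open Scope ring_scope.

Set Implicit Arguments. Unset Strict Implicit. Unset Printing Implicit Defensive.

Lemma height0 Z : height Z 0 = 0.
Proof. by rewrite /height take0 big_nil. Qed.

Lemma height_nil i : height [::] i = 0.
Proof. by rewrite /height big_nil. Qed.

Lemma height_cat A B i : height (A ++ B) i = height A i + height B (i - size A).
Proof.
rewrite /height take_cat; case: ltnP => h.
  have -> : (i - size A)%N = 0%N by apply/eqP; rewrite subn_eq0 ltnW.
  by rewrite take0 big_nil addr0.
rewrite big_cat /= (take_oversize h) //.
Qed.

Lemma height_over Z i : (size Z <= i)%N -> height Z i = height Z (size Z).
Proof. by move=> h; rewrite /height !take_oversize. Qed.

Lemma height_take Z k i : height (take k Z) i = height Z (minn i k).
Proof.
rewrite /height; case: (leqP i k) => h.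
  by rewrite take_takel.
rewrite take_oversize // size_take; case: ifP => //; lia.
Qed.

Lemma height_drop Z k i : height (drop k Z) i = height Z (k + i) - height Z k.
Proof. by rewrite /height takeD big_cat /= addrAC subrr add0r. Qed.

Lemma heightS Z i : height Z i.+1 =
  height Z i + (if (i < size Z)%N then step_val (nth false Z i) else 0).
Proof.
case: ltnP => h.
  by rewrite /height (take_nth false h) -cats1 big_cat /= big_seq1.
by rewrite !(@height_over Z) ?addr0 //; lia.
Qed.

Lemma height_step Z i : height Z i.+1 = height Z i + 1 \/
  height Z i.+1 = height Z i - 1 \/ height Z i.+1 = height Z i.
Proof. rewrite heightS; case: ifP => _; [case: nth => /=|]; lia. Qed.

Lemma height_cons b Z i :
  height (b :: Z) i.+1 = step_val b + height Z i.
Proof. by rewrite /height /= big_cons. Qed.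

Definition dyck (Z : seq bool) := (forall i, 0 <= height Z i) /\ height Z (size Z) = 0.

Lemma is_dyckP n Z : is_dyck n Z <-> (size Z = 2 * n)%N /\ dyck Z.
Proof.
rewrite /is_dyck; split.
  case/and3P => /eqP hs /allP H /eqP H2; split => //; split => // i.
  case: (leqP i (size Z)) => hi.
    by apply: H; rewrite mem_iota; lia.
  rewrite height_over; last lia.
  by rewrite H2.
case=> hs [H1 H2]; apply/and3P; split; first by rewrite hs.
  by apply/allP => i _; apply: H1.
by rewrite H2.
Qed.

Lemma height_count Z i : height Z i = 2%:R * (count id (take i Z))%:R - (size (take i Z))%:R.
Proof.
rewrite /height; elim: (take i Z) => [|b s IH]; first by rewrite big_nil /=; lia.
rewrite big_cons IH /=; case: b => /=; lia.
Qed.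

Lemma dyck_even Z : dyck Z -> exists k, size Z = (2 * k)%N.
Proof.
case=> _ h; exists (count id Z); move: h; rewrite height_count take_size; lia.
Qed.

Lemma filter_iota_head (p : pred nat) a n k :
  (forall i, (a <= i < k)%N -> ~~ p i) -> p k -> (a <= k < a + n)%N ->
  [seq i <- iota a n | p i] = k :: [seq i <- iota k.+1 (a + n - k.+1) | p i].
Proof.
move=> H pk hk.
have -> : n = ((k - a) + (a + n - k.+1).+1)%N by lia.
rewrite iotaD filter_cat.
have -> : [seq i <- iota a (k - a) | p i] = [::].
  apply/eqP; rewrite -[_ == _]negbK -has_filter; apply/hasPn => i.
  by rewrite mem_iota => hi; apply: H; lia.
have -> : (a + (k - a))%N = k by lia.
by rewrite /= pk; congr (_ :: [seq i <- iota _ _ | _]); lia.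
Qed.

Lemma filter_iota_first (p : pred nat) a n k r :
  [seq i <- iota a n | p i] = k :: r ->
  [/\ (a <= k < a + n)%N, p k & forall i, (a <= i < k)%N -> ~~ p i].
Proof.
move=> E.
have kin : k \in [seq i <- iota a n | p i] by rewrite E mem_head.
rewrite mem_filter mem_iota in kin; case/andP: kin => pk kr; split => // i hi.
apply/negP => pi.
have iin : i \in [seq i <- iota a n | p i] by rewrite mem_filter pi mem_iota; lia.
have S := sorted_filter ltn_trans p (iota_ltn_sorted a n).
rewrite E /= in S iin; have := order_path_min ltn_trans S.
rewrite in_cons in iin; case/orP: iin => [/eqP ei|ir]; first lia.
by move/allP/(_ i ir); lia.
Qed.

Definition rot_res (P : seq bool) j k :=
  take j P ++ drop j.+1 (take k P) ++ false :: drop k P.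

Lemma rotateP P j P' : rotate P j = Some P' <->
  exists k, [/\ nth true P j = false /\ nth false P j.+1 = true,
    (j.+2 <= k <= size P)%N, height P k = height P j.+1,
    (forall i, (j.+2 <= i < k)%N -> height P i != height P j.+1) &
    P' = rot_res P j k].
Proof.
rewrite /rotate; split.
  case: ifP => // /andP [/eqP h1 /eqP h2].
  case E: [seq _ <- _ | _] => [|k r] // [<-].
  case: (filter_iota_first E) => hk /eqP pk H.
  exists k; split => //; lia.
case=> k [[h1 h2] hk pk H ->]; rewrite h1 h2 /=.
by rewrite (@filter_iota_head _ _ _ k) //; [rewrite pk | lia].
Qed.

Lemma rotate_size P j P' : rotate P j = Some P' -> size P' = size P.
Proof.
case/rotateP => k [[h1 h2] hk pk H ->]; rewrite /rot_res !size_cat /= size_drop size_take.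
rewrite size_drop size_take; case: ifP; case: ifP; lia.
Qed.

Lemma rotate_j P j P' : rotate P j = Some P' -> (j.+1 < size P)%N.
Proof.
case/rotateP => k [[h1 h2] hk pk H _]; lia.
Qed.

Lemma height_rot_res P j k i :
  (j.+2 <= k <= size P)%N -> nth true P j = false ->
  height P k = height P j.+1 ->
  height (rot_res P j k) i =
    if (i <= j)%N then height P i else if (i < k)%N then height P i.+1 + 1
    else height P i.
Proof.
move=> hk hj hkk.
have hj1 : height P j.+1 = height P j - 1.
  rewrite heightS; have -> : (j < size P)%N by lia.
  by rewrite (set_nth_default true) ?hj //; lia.
rewrite /rot_res height_cat height_cat height_take height_drop !height_take.
rewrite size_drop !size_takel; try lia.
case: (leqP i j) => hij.
  have -> : (i - j)%N = 0%N by lia.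
  rewrite addn0 subrr add0r.
  have -> : (0 - (k - j.+1))%N = 0%N by lia.
  by rewrite height0 addr0.
have -> : (minn j.+1 k) = j.+1 by lia.
case: (ltnP i k) => hik.
  have -> : (minn (j.+1 + (i - j)) k) = i.+1 by lia.
  have -> : (i - j - (k - j.+1))%N = 0%N by lia.
  rewrite height0 addr0; lia.
have -> : (minn (j.+1 + (i - j)) k) = k by lia.
have -> : (i - j - (k - j.+1))%N = (i - k).+1 by lia.
rewrite height_cons height_drop.
have -> : (k + (i - k))%N = i by lia.
rewrite /step_val; lia.
Qed.

Lemma rotate_height P j P' i : rotate P j = Some P' -> height P i <= height P' i.
Proof.
case/rotateP => k [[h1 h2] hk pk H ->]; rewrite height_rot_res //.
case: ifP => // _; case: ifP => // _.
case: (height_step P i); lia.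
Qed.

Lemma rotate_end P j P' : rotate P j = Some P' -> height P' (size P') = height P (size P).
Proof.
move=> R; rewrite (rotate_size R); case/rotateP: R => k [[h1 h2] hk pk H ->].
rewrite height_rot_res //; case: ifP => hh; first lia.
by case: ifP => // hh2; lia.
Qed.

Lemma rotate_dyck P j P' : rotate P j = Some P' -> dyck P -> dyck P'.
Proof.
move=> R [H1 H2]; split; last by rewrite (rotate_end R).
by move=> i; have := H1 i; have := rotate_height i R; lia.
Qed.

Lemma rotate_height_j1 P j P' : rotate P j = Some P' -> height P' j.+1 = height P j + 1.
Proof.
case/rotateP => k [[h1 h2] hk pk H ->]; rewrite height_rot_res //.
rewrite ltnn; have -> : (j.+1 < k)%N by lia.
rewrite heightS; have -> : (j.+1 < size P)%N by lia.
rewrite h2 heightS; have -> : (j < size P)%N by lia.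
rewrite (set_nth_default true) ?h1 /step_val; lia.
Qed.

Lemma height_mid A Z C t : (t <= size Z)%N ->
  height (A ++ Z ++ C) (size A + t) = height A (size A) + height Z t.
Proof.
move=> ht; rewrite height_cat height_cat.
have -> : (size A + t - size A)%N = t by lia.
have -> : (t - size Z)%N = 0%N by lia.
by rewrite height0 addr0 (@height_over A) //; lia.
Qed.

Lemma nth_mid (x0 : bool) A Z C t : (t < size Z)%N ->
  nth x0 (A ++ Z ++ C) (size A + t) = nth x0 Z t.
Proof.
move=> ht; rewrite nth_cat; have -> : (size A + t < size A)%N = false by lia.
have -> : (size A + t - size A)%N = t by lia.
by rewrite nth_cat ht.
Qed.

Lemma rot_res_mid A Z C j k : (j < k <= size Z)%N ->
  rot_res (A ++ Z ++ C) (size A + j) (size A + k) = A ++ rot_res Z j k ++ C.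
Proof.
move=> hk; rewrite /rot_res.
rewrite take_cat; have -> : (size A + j < size A)%N = false by lia.
have -> : (size A + j - size A)%N = j by lia.
rewrite take_cat; have -> : (j < size Z)%N by lia.
rewrite take_cat; have -> : (size A + k < size A)%N = false by lia.
have -> : (size A + k - size A)%N = k by lia.
rewrite take_cat; case: (ltnP k (size Z)) => hkz.
- rewrite -addnS drop_cat; have -> : (size A + j.+1 < size A)%N = false by lia.
  have -> : (size A + j.+1 - size A)%N = j.+1 by lia.
  rewrite drop_cat; have -> : (size A + k < size A)%N = false by lia.
  have -> : (size A + k - size A)%N = k by lia.
  rewrite drop_cat hkz -!catA /=.
  by [].
- have -> : k = size Z by lia.
  rewrite subnn take0 cats0 -addnS drop_cat; have -> : (size A + j.+1 < size A)%N = false by lia.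
  have -> : (size A + j.+1 - size A)%N = j.+1 by lia.
  rewrite drop_cat; have -> : (size A + size Z < size A)%N = false by lia.
  have -> : (size A + size Z - size A)%N = size Z by lia.
  rewrite drop_cat ltnn subnn drop0 drop_size take_size.
  by rewrite -!catA.
Qed.

Lemma rotate_mid A Z C j Z' : rotate Z j = Some Z' ->
  rotate (A ++ Z ++ C) (size A + j) = Some (A ++ Z' ++ C).
Proof.
case/rotateP => k [[h1 h2] hk pk H ->]; apply/rotateP; exists (size A + k)%N; split.
- rewrite nth_mid; last lia. rewrite -addnS nth_mid; last lia. by [].
- rewrite !size_cat; lia.
- by rewrite -addnS !height_mid; try lia.
- move=> i hi; have -> : i = (size A + (i - size A))%N by lia.
  rewrite -addnS !height_mid; try lia.
  have Hi : height Z (i - size A) != height Z j.+1 by apply: H; lia.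
  by apply: contra Hi => /eqP E; apply/eqP; lia.
- by rewrite rot_res_mid //; lia.
Qed.

Lemma ivt Z a b v : (a <= b)%N -> v < height Z a -> height Z b <= v ->
  exists k, (a < k <= b)%N /\ height Z k = v.
Proof.
elim: b => [|b IH] hab ha hb.
  have ea : a = 0%N by lia.
  by subst a; lia.
case: (ltnP a b.+1) => hab'.
2:{ have ea : a = b.+1 by lia. by subst a; lia. }
case: (lerP (height Z b) v) => hv.
  case: (IH _ ha hv); first lia.
  by move=> k [hk1 hk2]; exists k; split => //; lia.
exists b.+1; split; first lia.
case: (height_step Z b); lia.
Qed.

Lemma rotate_exists Z j : dyck Z -> nth true Z j = false -> nth false Z j.+1 = true ->
  (j.+1 < size Z)%N -> exists Z', rotate Z j = Some Z'.
Proof.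
move=> [H1 H2] h1 h2 hj; rewrite /rotate h1 h2 /=.
case E: [seq _ <- _ | _] => [|k r]; last by eexists.
have h3 : height Z j.+2 = height Z j.+1 + 1.
  by rewrite heightS hj h2.
case: (@ivt Z j.+2 (size Z) (height Z j.+1)); try lia.
  by rewrite H2; have := H1 j.+1; lia.
move=> k [hk1 hk2].
have : k \in [seq i <- iota j.+2 (size Z - j.+1) | height Z i == height Z j.+1].
  by rewrite mem_filter hk2 eqxx mem_iota /=; lia.
by rewrite E.
Qed.

Inductive star : seq bool -> seq bool -> Prop :=
| star_refl x : star x x
| star_step x y z : (exists j, rotate x j = Some y) -> star y z -> star x z.

Lemma star_trans x y z : star x y -> star y z -> star x z.
Proof. by elim=> // a b c H _ IH /IH; apply: star_step. Qed.

Lemma star_one x y j : rotate x j = Some y -> star x y.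
Proof. by move=> H; apply: (star_step (ex_intro _ j H)); constructor. Qed.

Lemma star_mid A C Z Z' : star Z Z' -> star (A ++ Z ++ C) (A ++ Z' ++ C).
Proof.
elim=> [x|x y z [j H] _ IH]; first by constructor.
by apply: star_step IH; exists (size A + j)%N; apply: rotate_mid.
Qed.

Lemma star_height Z W : star Z W -> forall i, height Z i <= height W i.
Proof.
elim=> // x y z [j H] _ IH i.
by have := rotate_height i H; have := IH i; lia.
Qed.

Lemma star_dyck Z W : star Z W -> dyck Z -> dyck W.
Proof. by elim=> // x y z [j H] _ IH /(rotate_dyck H). Qed.

Lemma star_size Z W : star Z W -> size W = size Z.
Proof. by elim=> // x y z [j H] _ IH; rewrite IH (rotate_size H). Qed.

Lemma dyck_nil : dyck [::].
Proof. by split => [i|]; rewrite height_nil. Qed.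

Lemma dyck_cat A B : dyck A -> dyck B -> dyck (A ++ B).
Proof.
move=> [A1 A2] [B1 B2]; split.
  move=> i; rewrite height_cat; case: (leqP i (size A)) => hi.
    have -> : (i - size A)%N = 0%N by lia.
    by rewrite height0; have := A1 i; lia.
  by rewrite (@height_over A); [have := B1 (i - size A)%N; lia | lia].
rewrite height_cat size_cat (@height_over A (size A + size B)); last lia.
by rewrite A2 addKn B2 add0r.
Qed.

Lemma height_prime X Y i : height X (size X) = 0 ->
  height (true :: X ++ false :: Y) i =
  if i == 0%N then 0 else if (i <= (size X).+1)%N then 1 + height X i.-1
  else height Y (i - (size X).+2).
Proof.
move=> hX; case: i => [|i] /=; first by rewrite height0.
rewrite height_cons height_cat; case: (leqP i (size X)) => hi.
  have -> : (i - size X)%N = 0%N by lia.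
  by rewrite height0 addr0 ifT //; lia.
rewrite ifF; last lia.
rewrite (@height_over X) ?hX; last lia.
have -> : (i - size X)%N = (i - (size X).+1).+1 by lia.
rewrite height_cons /=.
have -> : (i.+1 - (size X).+2)%N = (i - (size X).+1)%N by lia.
lia.
Qed.

Lemma dyck_prime X Y : dyck X -> dyck Y -> dyck (true :: X ++ false :: Y).
Proof.
move=> [X1 X2] [Y1 Y2]; split.
  move=> i; rewrite height_prime //; case: ifP => // _; case: ifP => // _.
  by have := X1 i.-1; lia.
rewrite height_prime //= size_cat /=.
rewrite ifF; last lia.
by have -> : ((size X + (size Y).+1).+1 - (size X).+2)%N = size Y by lia.
Qed.

Lemma dyck_take Z a : dyck Z -> height Z a = 0 -> dyck (take a Z).
Proof.
move=> [Z1 Z2] ha; split => [i|]; first by rewrite height_take.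
rewrite height_take size_take; case: ifP => h.
  by have -> : minn a a = a by lia.
rewrite (@height_over Z (minn _ _)) ?Z2 //; lia.
Qed.

Lemma dyck_drop Z a : dyck Z -> height Z a = 0 -> dyck (drop a Z).
Proof.
move=> [Z1 Z2] ha; split => [i|]; first by rewrite height_drop ha subr0.
rewrite height_drop ha subr0 size_drop.
case: (leqP a (size Z)) => h.
  by have -> : (a + (size Z - a))%N = size Z by lia.
by rewrite height_over ?Z2 //; lia.
Qed.

Lemma first_return Z : dyck Z -> Z <> [::] ->
  exists X Y, [/\ Z = true :: X ++ false :: Y, dyck X & dyck Y].
Proof.
case: Z => [|z Z1] // dZ _; case: (dZ) => H1 H2.
have hz : z = true.
  by move: (H1 1%N); rewrite height_cons height0; case: (z) => //=; lia.
subst z.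
have hs : forall i, height (true :: Z1) i.+1 = 1 + height Z1 i.
  by move=> i; rewrite height_cons.
case E: [seq i <- iota 1 (size (true :: Z1)) | height (true :: Z1) i == 0] => [|f r].
  have : size (true :: Z1) \in [seq i <- iota 1 (size (true :: Z1)) | height (true :: Z1) i == 0].
    by rewrite mem_filter H2 eqxx mem_iota /=; lia.
  by rewrite E.
case: (filter_iota_first E) => hf /eqP hf0 hpos.
case: f hf hf0 hpos E => [|[|g]] hf hf0 hpos E; first lia.
  by move: hf0; rewrite hs height0.
have hpos' : forall i, (i <= g)%N -> 0 <= height Z1 i.
  move=> i hi; have ne : height (true :: Z1) i.+1 != 0 by apply: hpos; lia.
  rewrite hs in ne; have := H1 i.+1; rewrite hs; move: ne => /eqP; lia.
have hg1 : height Z1 g = 0.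
  have := hpos' g (leqnn g).
  move: hf0; rewrite hs => e.
  case: (height_step Z1 g); lia.
exists (take g Z1), (drop g.+2 (true :: Z1)); split.
- have hgs : (g < size Z1)%N by rewrite /= in hf; lia.
  have nthf : nth false Z1 g = false.
    move: hf0; rewrite hs heightS hgs hg1.
    by case: nth => //=; lia.
  by rewrite /= -{1}(cat_take_drop g Z1) (drop_nth false hgs) nthf.
- split => [i|]; first by rewrite height_take; apply: hpos'; lia.
  rewrite size_take; case: ifP => h.
    by rewrite height_take minnn.
  by move: h; rewrite /= in hf; lia.
- exact: (dyck_drop dZ hf0).
Qed.

Lemma last_return Z : dyck Z -> Z <> [::] ->
  exists Q1 Q2, [/\ Z = Q1 ++ true :: Q2 ++ [:: false], dyck Q1 & dyck Q2].
Proof.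
move=> dZ nZ; have [n hs] : exists n, (size Z <= n)%N by exists (size Z).
move: Z hs dZ nZ; elim: n => [|n IH] Z hs dZ nZ.
  by case: Z hs dZ nZ.
case: (first_return dZ nZ) => X [Y [eZ dX dY]].
case: Y eZ dY => [|y Y'] eZ dY.
  by exists [::], X; split => //; apply: dyck_nil.
case: (IH (y :: Y')) => //.
  by move: hs; rewrite eZ /= size_cat /=; lia.
move=> Q1 [Q2 [eY d1 d2]].
exists (true :: X ++ false :: Q1), Q2; split => //.
  by rewrite eZ eY /= -catA.
exact: dyck_prime.
Qed.

Lemma prime_uniq_aux X X' Y Y' : dyck X -> dyck X' ->
  true :: X ++ false :: Y = true :: X' ++ false :: Y' -> ~ (size X < size X')%N.
Proof.
move=> [X1 X2] [X1' X2'] E lt.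
have := congr1 (fun Z => height Z (size X).+2) E => /=.
rewrite !height_prime //= ifF; last lia.
rewrite ifT; last lia.
rewrite subnn height0; have := X1' (size X).+1; lia.
Qed.

Lemma prime_uniq X X' Y Y' : dyck X -> dyck X' ->
  true :: X ++ false :: Y = true :: X' ++ false :: Y' -> X = X' /\ Y = Y'.
Proof.
move=> dX dX' E.
have hs : size X = size X'.
  have := prime_uniq_aux dX dX' E; have := prime_uniq_aux dX' dX (esym E); lia.
case: E => /eqP; rewrite eqseq_cat // => /andP [/eqP -> /eqP [->]]; by [].
Qed.

Lemma last_uniq_aux Q1 Q2 Q1' Q2' : dyck Q1 -> dyck Q2 -> dyck Q1' -> dyck Q2' ->
  Q1 ++ true :: Q2 ++ [:: false] = Q1' ++ true :: Q2' ++ [:: false] ->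
  ~ (size Q1 < size Q1')%N.
Proof.
move=> [A1 A2] [B1 B2] [C1 C2] [D1 D2] E lt.
have hsz := congr1 size E; rewrite !size_cat /= !size_cat /= in hsz.
have := congr1 (fun Z => height Z (size Q1')) E => /=.
rewrite !height_cat subnn height0 addr0 C2 (@height_over Q1); last lia.
rewrite A2 add0r.
have -> : (size Q1' - size Q1)%N = (size Q1' - size Q1).-1.+1 by lia.
rewrite height_cons height_cat /=.
have -> : ((size Q1' - size Q1).-1 - size Q2)%N = 0%N by lia.
rewrite height0 addr0; have := B1 (size Q1' - size Q1).-1; lia.
Qed.

Lemma last_uniq Q1 Q2 Q1' Q2' : dyck Q1 -> dyck Q2 -> dyck Q1' -> dyck Q2' ->
  Q1 ++ true :: Q2 ++ [:: false] = Q1' ++ true :: Q2' ++ [:: false] ->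
  Q1 = Q1' /\ Q2 = Q2'.
Proof.
move=> d1 d2 d1' d2' E.
have hs : size Q1 = size Q1'.
  have := last_uniq_aux d1 d2 d1' d2' E; have := last_uniq_aux d1' d2' d1 d2 (esym E); lia.
move/eqP: E; rewrite eqseq_cat // => /andP [/eqP -> /eqP [E2]]; split => //.
have hs2 : size Q2 = size Q2' by have := congr1 size E2; rewrite !size_cat /=; lia.
by move/eqP: E2; rewrite eqseq_cat // => /andP [/eqP ->].
Qed.

Lemma rotate_prime0 B : dyck B ->
  rotate (false :: true :: B ++ [:: false]) 0 = Some (true :: B ++ [:: false; false]).
Proof.
move=> [B1 B2]; apply/rotateP; exists (size B).+3; split => //.
- rewrite /= size_cat /=; lia.
- rewrite height_cons height_prime // /= ifF; last lia.
  by rewrite height_nil height_cons height0.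
- move=> i hi; have -> : i = i.-1.+1 by lia.
  rewrite !height_cons height_prime // height0 ifF; last lia.
  rewrite ifT; last lia.
  by have := B1 i.-1.-1; apply: contraTneq; rewrite /=; lia.
- rewrite /rot_res take0 /= take_oversize; last by rewrite size_cat /=; lia.
  rewrite drop_oversize ?size_cat //=; [by rewrite -catA | lia].
Qed.

Lemma rotate_prime A B Y : dyck B ->
  rotate (A ++ false :: true :: B ++ false :: Y) (size A) =
  Some (A ++ true :: B ++ false :: false :: Y).
Proof.
move=> dB; have := rotate_mid A Y (rotate_prime0 dB).
by rewrite addn0 /= -!catA.
Qed.

Lemma Dshift A W : dyck W -> star (A ++ false :: W) (A ++ W ++ [:: false]).
Proof.
have [n hs] : exists n, (size W <= n)%N by exists (size W).
elim: n A W hs => [|n IH] A W hs dW.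
  by case: W hs dW => // _ _; constructor.
case: W hs dW => [|w W0] hs dW; first by constructor.
case: (first_return dW) => // B [Y [eW dB dY]].
rewrite eW; apply: star_step.
  by exists (size A); apply: rotate_prime.
have := IH (A ++ true :: B ++ [:: false]) Y.
rewrite -!catA /= -!catA /=; apply => //.
by move: hs; rewrite eW /= size_cat /=; lia.
Qed.

Lemma build_le P1 Q1 X Y Q2 : star P1 Q1 -> star (X ++ Y) Q2 -> dyck X -> dyck Y ->
  star (P1 ++ true :: X ++ false :: Y) (Q1 ++ true :: Q2 ++ [:: false]).
Proof.
move=> s1 s2 dX dY.
apply: (@star_trans _ (P1 ++ true :: (X ++ Y) ++ [:: false])).
  have := Dshift (P1 ++ true :: X) dY.
  by rewrite -!catA /=.
apply: (@star_trans _ (P1 ++ true :: Q2 ++ [:: false])).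
  by have := star_mid P1 [:: false] (star_mid [:: true] [::] s2); rewrite /= !cats0.
by have := star_mid [::] (true :: Q2 ++ [:: false]) s1.
Qed.

Lemma star_split Z W : star Z W -> dyck Z -> forall C E, W = C ++ E -> dyck C ->
  star (take (size C) Z) C /\ star (drop (size C) Z) E.
Proof.
elim=> [x|x y z [j R] sy IH] dx C E eW dC.
  by rewrite eW take_size_cat // drop_size_cat //; split; constructor.
have dy := rotate_dyck R dx.
case: (IH dy C E eW dC) => IH1 IH2.
have sxz : star x z by apply: star_step sy; exists j.
have hz : height z (size C) = 0.
  by rewrite eW height_cat subnn height0 addr0; case: dC.
have hxa : height x (size C) = 0.
  by have := star_height sxz (size C); case: dx => dx1 _; have := dx1 (size C); lia.
have hya : height y (size C) = 0.
  by have := star_height sy (size C); case: dy => dy1 _; have := dy1 (size C); lia.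
have sz : size z = size x by apply: star_size sxz.
have ha : (size C <= size x)%N by rewrite -sz eW size_cat; lia.
have dA := dyck_take dx hxa; have dB := dyck_drop dx hxa.
have sA : size (take (size C) x) = size C by rewrite size_takel.
have ex := esym (cat_take_drop (size C) x).
have hjx := rotate_j R.
case/rotateP: (R) => k [[h1 h2] hk pk H ey].
case: (ltnP j.+1 (size C)) => hj.
  have [A' RA] : exists A', rotate (take (size C) x) j = Some A'.
    apply: rotate_exists => //; rewrite ?nth_take ?sA //; lia.
  have := rotate_mid [::] (drop (size C) x) RA; rewrite /= -ex R => -[ey'].
  have sA' : size A' = size C by rewrite (rotate_size RA).
  rewrite ey' take_size_cat // in IH1; rewrite ey' drop_size_cat // in IH2.
  split => //; apply: star_step IH1; by exists j.
case: (ltnP j (size C)) => hj2.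
  have ej : size C = j.+1 by lia.
  have := rotate_height_j1 R; rewrite -ej hya.
  have : height x j.+1 = height x j - 1.
    by rewrite heightS ifT ?(set_nth_default true) ?h1 //; lia.
  by rewrite -ej hxa; lia.
have [B' RB] : exists B', rotate (drop (size C) x) (j - size C) = Some B'.
  apply: rotate_exists => //; rewrite ?nth_drop ?size_drop.
  - by have -> : (size C + (j - size C))%N = j by lia.
  - by have -> : (size C + (j - size C).+1)%N = j.+1 by lia.
  - lia.
have := rotate_mid (take (size C) x) [::] RB; rewrite !cats0 sA -ex.
have -> : (size C + (j - size C))%N = j by lia.
rewrite R => -[ey'].
rewrite ey' take_size_cat // in IH1; rewrite ey' drop_size_cat // in IH2.
split => //; apply: star_step IH2; by exists (j - size C)%N.
Qed.

Lemma star_phi Z W : star Z W -> forall Q2, W = true :: Q2 ++ [:: false] -> dyck Q2 ->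
  forall X Y, dyck X -> dyck Y -> Z = true :: X ++ false :: Y -> star (X ++ Y) Q2.
Proof.
elim=> [x|x y z [j R] sy IH] Q2 eW dQ X Y dX dY ex.
  rewrite ex in eW; case: (prime_uniq dX dQ eW) => -> ->; rewrite cats0; constructor.
have hjx := rotate_j R.
case/rotateP: (R) => k [[h1 h2] _ _ _ _].
case: j R h1 h2 hjx => [|j] R h1 h2 hjx; first by rewrite ex in h1.
have sx : size x = (size X + size Y).+2 by rewrite ex /= size_cat /=; lia.
case: (ltnP j.+1 (size X)) => hj.
  have [X' RX] : exists X', rotate X j = Some X'.
    apply: rotate_exists => //.
    - by move: h1; rewrite ex /= nth_cat ifT //; lia.
    - by move: h2; rewrite ex /= nth_cat ifT //; lia.
  have := rotate_mid [:: true] (false :: Y) RX; rewrite add1n /= -ex R => -[ey].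
  have := IH Q2 eW dQ X' Y (rotate_dyck RX dX) dY ey.
  apply: star_step; exists j.
  by have := rotate_mid [::] Y RX.
case: (ltnP j (size X)) => hj2.
  by move: h2; rewrite ex /= nth_cat ifF; [have -> : (j.+1 - size X)%N = 0%N by lia | lia].
case: (ltnP (size X) j) => hj3; last first.
  have ej : j = size X by lia.
  case: Y dY ex sx h2 => [|y0 Y0] dY ex sx h2; first by rewrite /= in sx; lia.
  case: (first_return dY) => // B [Y' [eY dB dY']].
  have := rotate_prime (true :: X) Y' dB; rewrite -eY /= -ej -ex R => -[ey].
  have dX1 : dyck (X ++ true :: B ++ [:: false]) by apply: dyck_cat => //; apply: dyck_prime => //; apply: dyck_nil.
  have := IH Q2 eW dQ _ Y' dX1 dY'; rewrite ey -!catA /= -!catA /=.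
  by move=> /(_ erefl); rewrite eY.
set t := (j - size X).-1.
have ej : j.+1 = (size (true :: X ++ [:: false]) + t)%N by rewrite /= size_cat /=; lia.
have ex2 : x = (true :: X ++ [:: false]) ++ Y ++ [::] by rewrite ex cats0 /= -catA.
have [Y' RY] : exists Y', rotate Y t = Some Y'.
  apply: rotate_exists => //.
  - by move: h1; rewrite ex2 ej nth_mid //; lia.
  - by move: h2; rewrite -addn1 ej -addnA addn1 ex2 nth_mid //; lia.
  - lia.
have := rotate_mid (true :: X ++ [:: false]) [::] RY; rewrite -ex2 -ej R => -[ey].
have := IH Q2 eW dQ X Y' dX (rotate_dyck RY dY); rewrite ey /= -!catA cats0 => /(_ erefl).
apply: star_step; exists (size X + t)%N.
by have := rotate_mid X [::] RY; rewrite !cats0.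
Qed.

Lemma tle_star n (P Q : (2 * n).-tuple bool) : is_dyck n P -> tamari_le P Q -> star P Q.
Proof.
move=> dP /connectP [p pth ->]; elim: p P dP pth => [|a p IH] P dP /=.
  by move=> _; constructor.
case/andP => /and3P [_ da ts] pth.
apply: star_step (IH a da pth).
by case/hasP: ts => j _ /eqP R; exists j.
Qed.

Lemma star_tle n (x z : seq bool) : star x z -> forall P Q : (2 * n).-tuple bool, val P = x -> val Q = z ->
  is_dyck n P -> tamari_le P Q.
Proof.
elim=> [x0|x0 y z0 [j R] _ IH] P Q eP eQ dP.
  have e : P = Q by apply: val_inj; rewrite eP eQ.
  by rewrite e /tamari_le connect0.
have sy : size y == (2 * n)%N by rewrite (rotate_size R) -eP size_tuple.
have dy : is_dyck n (Tuple sy).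
  apply/is_dyckP; split; first by apply/eqP.
  by apply: (rotate_dyck R); rewrite -eP; case/is_dyckP: dP.
apply: connect_trans (IH (Tuple sy) Q erefl eQ dy).
apply: connect1; rewrite /= dP dy /=; apply/hasP; exists j.
  by rewrite mem_iota /= eP; have := rotate_j R; lia.
by rewrite eP R.
Qed.


Definition Ilist n : seq (seq bool * seq bool) :=
  [seq (val P, val Q) | P <- [seq P : (2 * n).-tuple bool <- index_enum ((2 * n).-tuple bool) | is_dyck n P],
     Q <- [seq Q : (2 * n).-tuple bool <- index_enum ((2 * n).-tuple bool) | is_dyck n Q && @tamari_le n P Q]].

Definition isint n (x : seq bool * seq bool) :=
  [/\ size x.1 = (2 * n)%N, size x.2 = (2 * n)%N, dyck x.1, dyck x.2 & star x.1 x.2].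

Lemma Ilist_mem n x : x \in Ilist n <-> isint n x.
Proof.
split.
  case/allpairsPdep => P [Q [hP hQ ->]].
  rewrite mem_filter in hP; rewrite mem_filter in hQ.
  case/andP: hP => dP _; case/andP: hQ => /andP [dQ tPQ] _.
  case/is_dyckP: (dP) => s1 d1; case/is_dyckP: (dQ) => s2 d2.
  by split => //; apply: tle_star.
case: x => A B [/= sA sB dA dB st].
have sA' : size A == (2 * n)%N by apply/eqP.
have sB' : size B == (2 * n)%N by apply/eqP.
have dA' : is_dyck n (Tuple sA') by apply/is_dyckP.
have dB' : is_dyck n (Tuple sB') by apply/is_dyckP.
apply/allpairsPdep; exists (Tuple sA'), (Tuple sB'); split => //.
  by rewrite mem_filter dA' mem_index_enum.
rewrite mem_filter dB' mem_index_enum andbT /=.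
exact: (star_tle st).
Qed.

Lemma Ilist_uniq n : uniq (Ilist n).
Proof.
apply: allpairs_uniq_dep.
- by rewrite filter_uniq // index_enum_uniq.
- by move=> P _; rewrite filter_uniq // index_enum_uniq.
- by move=> [P1 Q1] [P2 Q2] _ _ /= [/val_inj e1 /val_inj e2]; subst.
Qed.

Lemma sum_Ilist n (R : nmodType) (F : seq bool -> seq bool -> R) :
  \sum_(P : (2 * n).-tuple bool | is_dyck n P)
     \sum_(Q : (2 * n).-tuple bool | is_dyck n Q && tamari_le P Q) F P Q =
  \sum_(x <- Ilist n) F x.1 x.2.
Proof.
rewrite big_allpairs_dep /= big_filter; apply: eq_bigr => P _.
by rewrite big_filter.
Qed.

Definition cpos (P : seq bool) := [seq i <- iota 0 (size P).+1 | height P i == 0].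

Definition build (d : nat * ((seq bool * seq bool) * ((seq bool * seq bool) * nat))) :=
  let: (k, (x1, (x2, p))) := d in
  (x1.1 ++ true :: take p x2.1 ++ false :: drop p x2.1, x1.2 ++ true :: x2.2 ++ [:: false]).

Definition Dlist m :=
  [seq (k, r) | k <- iota 0 m.+1,
     r <- [seq (x1, r2) | x1 <- Ilist k,
            r2 <- [seq (x2, p) | x2 <- Ilist (m - k), p <- cpos x2.1]]].

Lemma Dlist_uniq m : uniq (Dlist m).
Proof.
apply: allpairs_uniq_dep; first exact: iota_uniq.
- move=> k _; apply: allpairs_uniq_dep; first exact: Ilist_uniq.
  + move=> x1 _; apply: allpairs_uniq_dep; first exact: Ilist_uniq.
    * by move=> x2 _; rewrite filter_uniq // iota_uniq.
    * by move=> [a b] [c d] _ _ /= [-> ->].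
  + by move=> [a b] [c d] _ _ /= [-> ->].
- by move=> [a b] [c d] _ _ /= [-> ->].
Qed.

Lemma Dlist_mem m k x1 x2 p :
  (k, (x1, (x2, p))) \in Dlist m <->
  [/\ (k <= m)%N, isint k x1, isint (m - k) x2 & p \in cpos x2.1].
Proof.
split.
  case/allpairsPdep => k' [r [hk hr [ek er]]]; subst k' r.
  case/allpairsPdep: hr => x1' [r2 [h1 hr2 [ek er]]]; subst x1' r2.
  case/allpairsPdep: hr2 => x2' [p' [h2 hp [ek er]]]; subst x2' p'.
  split; first by rewrite mem_iota in hk; lia.
  - exact/Ilist_mem.
  - exact/Ilist_mem.
  - exact: hp.
case=> hk h1 h2 hp.
apply/allpairsPdep; exists k, (x1, (x2, p)); split => //; first by rewrite mem_iota; lia.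
apply/allpairsPdep; exists x1, (x2, p); split => //; first exact/Ilist_mem.
by apply/allpairsPdep; exists x2, p; split => //; apply/Ilist_mem.
Qed.

Lemma cposP P p : p \in cpos P -> (p <= size P)%N /\ height P p = 0.
Proof. by rewrite mem_filter mem_iota => /andP [/eqP -> ?]; split => //; lia. Qed.

Lemma build_inj m : {in Dlist m &, injective build}.
Proof.
move=> [k [[P1 Q1] [[P2 Q2] p]]] [k' [[P1' Q1'] [[P2' Q2'] p']]].
move=> /Dlist_mem [hk [/= s1 s2 d1 d2 _] [/= s3 s4 d3 d4 _] /cposP [hp hp0]].
move=> /Dlist_mem [hk' [/= s1' s2' d1' d2' _] [/= s3' s4' d3' d4' _] /cposP [hp' hp0']].
rewrite /= => -[eP eQ]; simpl in *.
case: (last_uniq d2 d4 d2' d4' eQ) => e1 e2; subst Q1' Q2'.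
have ek : k' = k by lia.
subst k'.
move/eqP: eP; rewrite eqseq_cat; last by rewrite s1 s1'.
case/andP => /eqP e3 /eqP eP; subst P1'.
have dX := dyck_take d3 hp0; have dX' := dyck_take d3' hp0'.
case: (prime_uniq dX dX' eP) => ex ey.
have eP2 : P2 = P2' by rewrite -(cat_take_drop p P2) ex ey cat_take_drop.
subst P2'.
have ep : p = p' by have := congr1 size ex; rewrite !size_takel.
by subst p'.
Qed.

Lemma build_isint m d : d \in Dlist m -> isint m.+1 (build d).
Proof.
case: d => k [[P1 Q1] [[P2 Q2] p]].
move=> /Dlist_mem [hk [/= s1 s2 d1 d2 st1] [/= s3 s4 d3 d4 st2] /cposP [hp hp0]]; simpl in *.
have dX := dyck_take d3 hp0; have dY := dyck_drop d3 hp0.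
split => /=.
- rewrite size_cat /= size_cat /= size_take size_drop; case: ifP; lia.
- rewrite size_cat /= size_cat /=; lia.
- by apply: dyck_cat => //; apply: dyck_prime.
- by apply: dyck_cat => //; apply: dyck_prime => //; apply: dyck_nil.
- by apply: build_le => //; rewrite cat_take_drop.
Qed.

Lemma isint_build m x : isint m.+1 x -> exists2 d, d \in Dlist m & x = build d.
Proof.
case: x => P Q [/= sP sQ dP dQ st].
have nQ : Q <> [::] by move=> eQ; rewrite eQ in sQ.
case: (last_return dQ nQ) => Q1 [Q2 [eQ d1 d2]].
have [k ek] := dyck_even d1.
have hQ1 : height Q (size Q1) = 0.
  by rewrite eQ height_cat subnn height0 addr0; case: d1.
have hP1 : height P (size Q1) = 0.
  by have := star_height st (size Q1); case: dP => dP1 _; have := dP1 (size Q1); lia.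
have szQ : size Q = (size Q1 + size Q2).+2 by rewrite eQ size_cat /= size_cat /=; lia.
case: (star_split st dP eQ d1) => st1 st2.
have dD := dyck_drop dP hP1.
have nD : drop (size Q1) P <> [::].
  by move=> e; have := congr1 size e; rewrite size_drop /=; lia.
case: (first_return dD nD) => X [Y [eD dX dY]].
have st3 := star_phi st2 erefl d2 dX dY eD.
have szD : size (drop (size Q1) P) = (size X + size Y).+2 by rewrite eD /= size_cat /=; lia.
exists (k, ((take (size Q1) P, Q1), ((X ++ Y, Q2), size X))).
  apply/Dlist_mem; split.
  - lia.
  - split => //=; first by rewrite size_takel; lia.
    exact: dyck_take.
  - split => //=.
    + by rewrite size_cat; move: szD; rewrite size_drop; lia.
    + lia.
    + exact: dyck_cat.
  - rewrite mem_filter mem_iota size_cat height_cat subnn height0 addr0.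
    by case: dX => _ ->; rewrite eqxx /=; lia.
rewrite /= take_size_cat // drop_size_cat // -eD cat_take_drop.
by rewrite eQ.
Qed.

Lemma perm_decomp m : perm_eq (Ilist m.+1) (map build (Dlist m)).
Proof.
apply: uniq_perm.
- exact: Ilist_uniq.
- by rewrite (map_inj_in_uniq (@build_inj m)) Dlist_uniq.
- move=> x; apply/idP/idP.
    by move/Ilist_mem/isint_build => [d hd ->]; apply: map_f.
  by case/mapP => d hd ->; apply/Ilist_mem; apply: build_isint.
Qed.

Lemma decomp m (R : nmodType) (F : seq bool -> seq bool -> R) :
  \sum_(x <- Ilist m.+1) F x.1 x.2 =
  \sum_(k < m.+1) \sum_(x1 <- Ilist k) \sum_(x2 <- Ilist (m - k)) \sum_(p <- cpos x2.1)
     F (x1.1 ++ true :: take p x2.1 ++ false :: drop p x2.1) (x1.2 ++ true :: x2.2 ++ [:: false]).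
Proof.
rewrite (perm_big _ (perm_decomp m)) big_map /Dlist big_allpairs_dep.
have -> : iota 0 m.+1 = index_iota 0 m.+1 by rewrite /index_iota subn0.
rewrite big_mkord.
apply: eq_bigr => k _; rewrite big_allpairs_dep; apply: eq_bigr => x1 _.
by rewrite big_allpairs_dep; apply: eq_bigr => x2 _; apply: eq_bigr => p _; case: x1.
Qed.

Lemma contact_cat A B : height A (size A) = 0 ->
  (contact (A ++ B)).+1 = (contact A + contact B)%N.
Proof.
move=> hA; rewrite /contact size_cat -addnS.
have -> : iota 0 (size A + (size B).+1) = iota 0 (size A) ++ iota (size A) (size B).+1.
  by rewrite iotaD.
rewrite count_cat.
have -> : iota (size A) (size B).+1 = [seq (size A + i)%N | i <- iota 0 (size B).+1].
  by rewrite -iotaDl addn0.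
rewrite count_map.
have -> : iota 0 (size A).+1 = iota 0 (size A) ++ [:: size A].
  by rewrite -addn1 iotaD.
rewrite [X in (_ = (X + _)%N)]count_cat [X in (_ = ((_ + X) + _)%N)]/= hA eqxx.
have -> : count (fun i => height (A ++ B) i == 0) (iota 0 (size A)) =
          count (fun i => height A i == 0) (iota 0 (size A)).
  apply: eq_in_count => i; rewrite mem_iota => hi.
  rewrite height_cat; have -> : (i - size A)%N = 0%N by lia.
  by rewrite height0 addr0.
have -> : count (preim (addn (size A)) (fun i => height (A ++ B) i == 0)) (iota 0 (size B).+1) =
          count (fun i => height B i == 0) (iota 0 (size B).+1).
  apply: eq_count => i /=; rewrite height_cat (@height_over A); last lia.
  rewrite hA add0r; have -> : (size A + i - size A)%N = i by lia.
  by [].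
lia.
Qed.

Lemma iota3 n : iota 0 n.+3 = [:: 0%N] ++ iota 1 n.+1 ++ [:: n.+2].
Proof.
have e : forall a b, iota a b.+1 = iota a b ++ [:: (a + b)%N].
  by move=> a b; rewrite -addn1 iotaD.
have -> : iota 0 n.+3 = 0%N :: iota 1 n.+2 by [].
by rewrite e add1n.
Qed.

Lemma contact_prime X : dyck X -> contact (true :: X ++ [:: false]) = 2%N.
Proof.
move=> [X1 X2]; rewrite /contact.
have -> : size (true :: X ++ [:: false]) = (size X).+2 by rewrite /= size_cat /= addn1.
rewrite iota3 !count_cat.
have -> : count (fun i => height (true :: X ++ [:: false]) i == 0) (iota 1 (size X).+1) = 0%N.
  apply/eqP; rewrite -leqn0 leqNgt -has_count; apply/hasPn => i; rewrite mem_iota => hi.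
  rewrite height_prime // ifF; last lia.
  rewrite ifT; last lia.
  by have := X1 i.-1; lia.
rewrite /= height0 eqxx /= height_prime // /= ifF; last lia.
have -> : ((size X).+2 - (size X).+2)%N = 0%N by lia.
by rewrite height_nil eqxx.
Qed.

Lemma contact_build P1 X Y : dyck P1 -> dyck X ->
  contact (P1 ++ true :: X ++ false :: Y) = (contact P1 + contact Y)%N.
Proof.
move=> [_ h1] dX.
have e : P1 ++ true :: X ++ false :: Y = P1 ++ ((true :: X ++ [:: false]) ++ Y).
  by rewrite /= -catA.
have hp : height (true :: X ++ [:: false]) (size (true :: X ++ [:: false])) = 0.
  by case: (dyck_prime dX dyck_nil).
have := contact_cat Y hp.
have := contact_cat ((true :: X ++ [:: false]) ++ Y) h1.
rewrite e contact_prime //; lia.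
Qed.

Lemma contact_drop P p : (p <= size P)%N -> height P p = 0 ->
  contact (drop p P) = count (fun i => height P i == 0) (iota p (size P - p).+1).
Proof.
move=> hp h0; rewrite /contact size_drop.
have -> : iota p (size P - p).+1 = [seq (p + i)%N | i <- iota 0 (size P - p).+1].
  by rewrite -iotaDl addn0.
rewrite count_map; apply: eq_count => i /=.
by rewrite height_drop h0 subr0.
Qed.

Lemma sum_suffix (R : pzSemiRingType) (x : R) (f : pred nat) a n :
  \sum_(p <- [seq i <- iota a n | f i]) x ^+ (count f (iota p (a + n - p))) =
  \sum_(i < count f (iota a n)) x ^+ i.+1.
Proof.
elim: n a => [|n IH] a; first by rewrite /= big_nil big_ord0.
rewrite /= (_ : (a + n.+1)%N = (a.+1 + n)%N); last lia.
case: ifP => fa.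
  rewrite big_cons IH big_ord_recr /= addrC.
  have -> : (a.+1 + n - a)%N = n.+1 by lia.
  by rewrite /= fa.
by rewrite IH add0n.
Qed.

Lemma sum_cpos (R : pzSemiRingType) (x : R) P :
  \sum_(p <- cpos P) x ^+ contact (drop p P) = \sum_(i < contact P) x ^+ i.+1.
Proof.
rewrite (eq_big_seq (fun p => x ^+ count (fun i => height P i == 0) (iota p (0 + (size P).+1 - p)))).
  by rewrite sum_suffix.
move=> p /cposP [hp h0]; rewrite contact_drop //.
by have -> : (0 + (size P).+1 - p)%N = (size P - p).+1 by lia.
Qed.

Definition hs (Q : seq bool) : {poly int} :=
  \sum_(i < (size Q).+1) 'X ^+ `|height Q i|%N.

Lemma hs_build Q1 Q2 : dyck Q1 -> dyck Q2 ->
  hs (Q1 ++ true :: Q2 ++ [:: false]) = hs Q1 + 'X * hs Q2 + 1.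
Proof.
move=> [A1 A2] [B1 B2]; rewrite /hs size_cat /= size_cat /=.
have -> : (size Q1 + (size Q2 + 1).+1).+1 = ((size Q1).+1 + ((size Q2).+1 + 1))%N by lia.
rewrite big_split_ord big_split_ord big_ord1 -addrA; congr (_ + _).
  apply: eq_bigr => i _; rewrite height_cat /=.
  have -> : (i - size Q1)%N = 0%N by case: i => /= i; lia.
  by rewrite height0 addr0.
congr (_ + _).
  rewrite mulr_sumr; apply: eq_bigr => i _ /=.
  rewrite height_cat (@height_over Q1); last lia.
  rewrite A2 add0r.
  have -> : ((size Q1).+1 + i - size Q1)%N = i.+1 by lia.
  rewrite height_cons height_cat /=.
  have -> : (i - size Q2)%N = 0%N by case: i => /= i; lia.
  rewrite height0 addr0 -exprS; congr (_ ^+ _).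
  by have := B1 i; lia.
rewrite /= height_cat (@height_over Q1); last lia.
rewrite A2 add0r.
have -> : ((size Q1).+1 + ((size Q2).+1 + 0) - size Q1)%N = (size Q2).+2 by lia.
rewrite height_cons height_cat (@height_over Q2); last lia.
rewrite B2 add0r.
have -> : ((size Q2).+1 - size Q2)%N = 1%N by lia.
by rewrite height_cons height0 /=.
Qed.

Lemma ddiffP (p : bipoly) : p - (p.[1])%:P = ddiff p * ('X - 1).
Proof.
have : root (p - (p.[1])%:P) 1 by rewrite /root hornerD hornerN hornerC subrr.
case/factor_theorem => q eq.
rewrite /ddiff eq polyC1 Pdiv.IdomainMonic.mulpK //.
by rewrite -polyC1 monicXsubC.
Qed.

Lemma ddiffE (p q : bipoly) : p - (p.[1])%:P = q * ('X - 1) -> ddiff p = q.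
Proof.
move=> e; rewrite /ddiff e Pdiv.IdomainMonic.mulpK //.
by rewrite -polyC1 monicXsubC.
Qed.

Lemma ddiffD (p q : bipoly) : ddiff (p + q) = ddiff p + ddiff q.
Proof.
apply: ddiffE; rewrite mulrDl -!ddiffP hornerD rmorphD /=.
by rewrite opprD addrACA.
Qed.

Lemma ddiff0 : ddiff 0 = 0.
Proof. by apply: ddiffE; rewrite horner0 subr0 mul0r. Qed.

Lemma ddiffMC (p : bipoly) (a : {poly int}) : ddiff (p * a%:P) = ddiff p * a%:P.
Proof.
apply: ddiffE; rewrite hornerM hornerC rmorphM /= -mulrBl ddiffP.
by rewrite mulrAC.
Qed.

Lemma ddiffXn c : ddiff ('X ^+ c) = \sum_(i < c) 'X ^+ i.
Proof.
apply: ddiffE; rewrite hornerXn expr1n polyC1 subrX1 mulrC.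
by [].
Qed.

Lemma ddiff_sum I (r : seq I) (c : I -> nat) (h : I -> {poly int}) :
  ddiff (\sum_(x <- r) 'X ^+ c x * (h x)%:P) = \sum_(x <- r) ddiff ('X ^+ c x) * (h x)%:P.
Proof.
elim: r => [|a r IH]; first by rewrite !big_nil ddiff0.
by rewrite !big_cons ddiffD ddiffMC IH.
Qed.

Lemma FcoefE n : Fcoef n = \sum_(x <- Ilist n) 'X ^+ contact x.1.
Proof. exact: (sum_Ilist n (fun A B => ('X : bipoly) ^+ contact A)). Qed.

Lemma HcoefE n : Hcoef n = \sum_(x <- Ilist n) 'X ^+ contact x.1 * (hs x.2)%:P.
Proof.
rewrite /Hcoef (sum_Ilist n (fun A B => ('X : bipoly) ^+ contact A *
   \sum_(i < (2 * n).+1) (('X : {poly int}) ^+ `|height B i|%N)%:P)).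
apply: eq_big_seq => x /Ilist_mem [_ s2 _ _ _].
by rewrite /hs s2 rmorph_sum.
Qed.

Definition G (c : nat) : bipoly := \sum_(i < c) 'X ^+ i.

Lemma inner_F k m x1 x2 : x1 \in Ilist k -> x2 \in Ilist (m - k) ->
  \sum_(p <- cpos x2.1) ('X : bipoly) ^+ contact (x1.1 ++ true :: take p x2.1 ++ false :: drop p x2.1)
  = 'X ^+ contact x1.1 * ('X * G (contact x2.1)).
Proof.
move=> /Ilist_mem [_ _ d1 _ _] /Ilist_mem [_ _ d3 _ _].
rewrite (eq_big_seq (fun p => ('X : bipoly) ^+ contact x1.1 * 'X ^+ contact (drop p x2.1))).
  rewrite -mulr_sumr sum_cpos /G; congr (_ * _).
  by rewrite mulr_sumr; apply: eq_bigr => i _; rewrite exprS.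
move=> p /cposP [hp h0]; rewrite contact_build ?exprD //.
exact: dyck_take.
Qed.

Lemma ddiff_sum1 I (r : seq I) (c : I -> nat) :
  ddiff (\sum_(x <- r) ('X : bipoly) ^+ c x) = \sum_(x <- r) G (c x).
Proof.
elim: r => [|a r IH]; first by rewrite !big_nil ddiff0.
by rewrite !big_cons ddiffD IH ddiffXn.
Qed.

Lemma ddiff_sumH I (r : seq I) (c : I -> nat) (h : I -> {poly int}) :
  ddiff (\sum_(x <- r) ('X : bipoly) ^+ c x * (h x)%:P) = \sum_(x <- r) G (c x) * (h x)%:P.
Proof. by rewrite ddiff_sum; apply: eq_bigr => x _; rewrite ddiffXn. Qed.

Lemma combine (R : comRingType) I J (r1 : seq I) (r2 : seq J) (a h : I -> R) (g h' : J -> R) (s X : R) :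
  \sum_(x1 <- r1) \sum_(x2 <- r2) a x1 * (X * g x2) * (h x1 + s * h' x2 + 1) =
  \sum_(x1 <- r1) \sum_(x2 <- r2) a x1 * (X * g x2) +
  (s * X) * ((\sum_(x1 <- r1) a x1) * (\sum_(x2 <- r2) g x2 * h' x2)) +
  X * ((\sum_(x1 <- r1) a x1 * h x1) * (\sum_(x2 <- r2) g x2)).
Proof.
rewrite !big_distrlr mulr_sumr [X * _]mulr_sumr -!big_split /=.
apply: eq_bigr => x1 _; rewrite mulr_sumr [X * _]mulr_sumr -!big_split /=.
by apply: eq_bigr => x2 _; ring.
Qed.

Unset Implicit Arguments.

Theorem proposition2p2 (n : nat) :
  Hcoef n =
    Fcoef n +
    (if n is m.+1 then
       (('X : {poly int})%:P * 'X) *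
         (\sum_(k < m.+1) Fcoef k * ddiff (Hcoef (m - k)%N))
       + 'X * (\sum_(k < m.+1) Hcoef k * ddiff (Fcoef (m - k)%N))
     else 0).
Proof.
case: n => [|m].
  rewrite addr0 /Hcoef /Fcoef; apply: eq_bigr => P _; apply: eq_bigr => Q _.
  by rewrite big_ord1 /height take0 big_nil /= expr0 polyC1 mulr1.
rewrite HcoefE FcoefE (decomp m (fun a b => ('X : bipoly) ^+ contact a * (hs b)%:P)).
rewrite (decomp m (fun a b => ('X : bipoly) ^+ contact a)) !mulr_sumr -!big_split /=.
apply: eq_bigr => k _.
rewrite !FcoefE !HcoefE ddiff_sumH ddiff_sum1 -!mulrA.
set s := ('X : {poly int})%:P.
have eL : \sum_(x1 <- Ilist k) \sum_(x2 <- Ilist (m - k)) \sum_(p <- cpos x2.1)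
   'X ^+ contact (x1.1 ++ true :: take p x2.1 ++ false :: drop p x2.1) *
   (hs (x1.2 ++ true :: x2.2 ++ [:: false]))%:P =
  \sum_(x1 <- Ilist k) \sum_(x2 <- Ilist (m - k))
   'X ^+ contact x1.1 * ('X * G (contact x2.1)) * ((hs x1.2)%:P + s * (hs x2.2)%:P + 1).
  apply: eq_big_seq => x1 h1; apply: eq_big_seq => x2 h2.
  rewrite -mulr_suml (inner_F h1 h2).
  case/Ilist_mem: h1 => _ _ _ d2 _; case/Ilist_mem: h2 => _ _ _ d4 _.
  by rewrite hs_build // !rmorphD rmorphM /= polyC1.
have eF : \sum_(x1 <- Ilist k) \sum_(x2 <- Ilist (m - k)) \sum_(p <- cpos x2.1)
   ('X : bipoly) ^+ contact (x1.1 ++ true :: take p x2.1 ++ false :: drop p x2.1) =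
  \sum_(x1 <- Ilist k) \sum_(x2 <- Ilist (m - k)) 'X ^+ contact x1.1 * ('X * G (contact x2.1)).
  apply: eq_big_seq => x1 h1; apply: eq_big_seq => x2 h2.
  exact: inner_F h1 h2.
rewrite eL eF combine.
rewrite !mulrA.
by rewrite addrA.
Qed.
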